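(* Fix $N\ge1$ and $\lambda\in\mathrm{Sign}_N$. Take $q=\mathfrak t\in(0,1)$, $s_x=0$ and $\xi_x=1$ for all $x\ge1$, and keep $s_0,\xi_0$ free; then $\xi_0^{-\ell(\lambda)}\mathsf F_\lambda(u_1,\dots,u_N)$ and $\xi_0^{\ell(\lambda)}\mathsf F^*_\lambda(v_1,\dots,v_N)$ are rational functions of $a=s_0\xi_0$ and $b=s_0/\xi_0$ (and of the variables). In the limit $a\to0$, $b\to\mathfrak t^{1-N}$, $$\xi_0^{-\ell(\lambda)}\mathsf F_\lambda(u_1,\dots,u_N)\to\prod_{r\ge0}(\mathfrak t;\mathfrak t)_{m_r(\lambda)}\cdot F^{HL}_\lambda(u_1,\dots,u_N;\mathfrak t),$$ $$\xi_0^{\ell(\lambda)}\mathsf F^*_\lambda(v_1,\dots,v_N)\to\prod_{j=1}^N\frac{1}{1-v_j\mathfrak t^{1-N}}\prod_{r\ge1}\frac{1}{(\mathfrak t;\mathfrak t)_{m_r(\lambda)}}\cdot Q^{HL}_\lambda(v_1,\dots,v_N;\mathfrak t).$$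
   Context: Signatures: $\mathrm{Sign}_N$ is the set of integer sequences $\lambda=(\lambda_1\ge\dots\ge\lambda_N\ge0)$; $m_r(\lambda)=\#\{i:\lambda_i=r\}$, $\ell(\lambda)=N-m_0(\lambda)$; $(a;q)_k=\prod_{i=0}^{k-1}(1-aq^i)$. Spin Hall--Littlewood functions (parameters $q$, $s_x,\xi_x$, $x\ge0$): with $\varphi_k(u)=\frac{1-q}{1-s_k\xi_ku}\prod_{j=0}^{k-1}\frac{\xi_ju-s_j}{1-s_j\xi_ju}$ and $\hat\varphi_k$ equal to $\varphi_k$ with every $\xi_x$ replaced by $\xi_x^{-1}$, $\mathsf F_\lambda(u_1,\dots,u_N)=\sum_{\sigma\in S_N}\sigma\Big(\prod_{i<j}\frac{u_i-qu_j}{u_i-u_j}\prod_{i=1}^N\varphi_{\lambda_i}(u_i)\Big)$ and $\mathsf F^*_\lambda(v_1,\dots,v_N)=\prod_{r\ge0}\frac{(s_r^2;q)_{m_r(\lambda)}}{(q;q)_{m_r(\lambda)}}\sum_{\sigma\in S_N}\sigma\Big(\prod_{i<j}\frac{v_i-qv_j}{v_i-v_j}\prod_{i=1}^N\hat\varphi_{\lambda_i}(v_i)\Big)$, where $\sigma$ permutes the variables only. Interpolation Hall--Littlewood polynomial: $F^{HL}_\lambda(u_1,\dots,u_N;\mathfrak t)=(1-\mathfrak t)^N\prod_{r\ge0}\frac{1}{(\mathfrak t;\mathfrak t)_{m_r(\lambda)}}\sum_{\sigma\in S_N}\sigma\Big(\prod_{i<j}\frac{u_i-\mathfrak tu_j}{u_i-u_j}\prod_{i=1}^{\ell(\lambda)}u_i^{\lambda_i}(1-\mathfrak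 t^{1-N}u_i^{-1})\Big)$. Hall--Littlewood polynomial: $Q^{HL}_\lambda(v_1,\dots,v_N;\mathfrak t)=\frac{(1-\mathfrak t)^N}{(\mathfrak t;\mathfrak t)_{N-\ell(\lambda)}}\sum_{\sigma\in S_N}\sigma\Big(\prod_{i<j}\frac{v_i-\mathfrak tv_j}{v_i-v_j}\prod_{i=1}^N v_i^{\lambda_i}\Big)$. *)

(* Defs.v *)
From HB Require Import structures.
From mathcomp Require Import all_boot all_order all_algebra all_fingroup.
Set Implicit Arguments. Unset Strict Implicit. Unset Printing Implicit Defensive.
Import Order.TTheory GRing.Theory Num.Theory.
Local Open Scope ring_scope.

Definition qpoch (R : ringType) (a q : R) (k : nat) : R :=
  \prod_(i < k) (1 - a * q ^+ i).

Definition is_signature (N : nat) (lam : 'I_N -> nat) : Prop :=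
  forall i j : 'I_N, (i <= j)%N -> (lam j <= lam i)%N.

Definition mult (N : nat) (lam : 'I_N -> nat) (r : nat) : nat :=
  #|[set i | lam i == r]|.

Definition ell (N : nat) (lam : 'I_N -> nat) : nat := (N - mult lam 0)%N.

(* every r >= sigbound lam has m_r(lambda) = 0, so products over r >= 0
   reduce to products over r < sigbound lam *)
Definition sigbound (N : nat) (lam : 'I_N -> nat) : nat :=
  (\max_(i < N) lam i).+1.

Section Defs.
Variable R : fieldType.

Definition phi (s xi : nat -> R) (q : R) (k : nat) (u : R) : R :=
  (1 - q) / (1 - s k * xi k * u) *
  \prod_(j < k) ((xi j * u - s j) / (1 - s j * xi j * u)).

Definition phihat (s xi : nat -> R) (q : R) (k : nat) (u : R) : R :=
  phi s (fun x => (xi x)^-1) q k u.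

Definition symprod (N : nat) (q : R) (u : 'I_N -> R) : R :=
  \prod_(i < N) \prod_(j < N | (i < j)%N) ((u i - q * u j) / (u i - u j)).

Definition spinF (N : nat) (s xi : nat -> R) (q : R) (lam : 'I_N -> nat)
    (u : 'I_N -> R) : R :=
  \sum_(sg : 'S_N)
     (symprod q (fun i => u (sg i)) *
      \prod_(i < N) phi s xi q (lam i) (u (sg i))).

Definition spinFstar (N : nat) (s xi : nat -> R) (q : R) (lam : 'I_N -> nat)
    (v : 'I_N -> R) : R :=
  (\prod_(r < sigbound lam)
      (qpoch (s r ^+ 2) q (mult lam r) / qpoch q q (mult lam r))) *
  \sum_(sg : 'S_N)
     (symprod q (fun i => v (sg i)) *
      \prod_(i < N) phihat s xi q (lam i) (v (sg i))).

Definition FHL (N : nat) (lam : 'I_N -> nat) (t : R) (u : 'I_N -> R) : R :=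
  (1 - t) ^+ N * (\prod_(r < sigbound lam) (qpoch t t (mult lam r))^-1) *
  \sum_(sg : 'S_N)
     (symprod t (fun i => u (sg i)) *
      \prod_(i < N | (i < ell lam)%N)
         (u (sg i) ^+ lam i * (1 - t ^- N.-1 * (u (sg i))^-1))).

Definition QHL (N : nat) (lam : 'I_N -> nat) (t : R) (v : 'I_N -> R) : R :=
  (1 - t) ^+ N / qpoch t t (N - ell lam) *
  \sum_(sg : 'S_N)
     (symprod t (fun i => v (sg i)) * \prod_(i < N) v (sg i) ^+ lam i).

Definition spec_s (s0 : R) (x : nat) : R := if x == 0%N then s0 else 0.
Definition spec_xi (xi0 : R) (x : nat) : R := if x == 0%N then xi0 else 1.

End Defs.

(* Main.v *)
Require Import Defs.
From HB Require Import structures.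
From mathcomp Require Import all_boot all_order all_algebra all_fingroup.
From mathcomp Require Import ring lra zify.
From mathcomp Require Import all_classical all_reals all_analysis.
Import Order.TTheory GRing.Theory Num.Theory.
Import numFieldNormedType.Exports.
Set Implicit Arguments. Unset Strict Implicit.
Local Open Scope ring_scope.

Section Cont.
Local Open Scope classical_set_scope.
Variable R : numFieldType.
Variable p0 : (R * R)%type.
Definition Cv (f : R * R -> R) (l : R) := f @ nbhs p0 --> l.

Lemma Cv_cst c : Cv (fun=> c) c.
Proof. exact: cvg_cst. Qed.
Lemma Cv_fst : Cv fst p0.1.
Proof. exact: cvg_fst. Qed.
Lemma Cv_snd : Cv snd p0.2.
Proof. exact: cvg_snd. Qed.
Lemma Cv_add f g a b : Cv f a -> Cv g b -> Cv (fun p => f p + g p) (a + b).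
Proof. exact: cvgD. Qed.
Lemma Cv_mul f g a b : Cv f a -> Cv g b -> Cv (fun p => f p * g p) (a * b).
Proof. exact: cvgM. Qed.
Lemma Cv_inv f a : a != 0 -> Cv f a -> Cv (fun p => (f p)^-1) a^-1.
Proof. exact: cvgV. Qed.
Lemma Cv_opp f a : Cv f a -> Cv (fun p => - f p) (- a).
Proof. exact: cvgN. Qed.

Lemma Cv_sum (I : Type) (r : seq I) (P : pred I) (F : I -> R * R -> R) (L : I -> R) :
  (forall i, P i -> Cv (F i) (L i)) ->
  Cv (fun p => \sum_(i <- r | P i) F i p) (\sum_(i <- r | P i) L i).
Proof.
move=> H; elim: r => [|x r IH].
  rewrite big_nil; under eq_fun do rewrite big_nil; exact: Cv_cst.
rewrite big_cons; under eq_fun do rewrite big_cons.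
case: (boolP (P x)) => Px; last exact: IH.
exact: Cv_add (H _ Px) IH.
Qed.

Lemma Cv_prod (I : Type) (r : seq I) (P : pred I) (F : I -> R * R -> R) (L : I -> R) :
  (forall i, P i -> Cv (F i) (L i)) ->
  Cv (fun p => \prod_(i <- r | P i) F i p) (\prod_(i <- r | P i) L i).
Proof.
move=> H; elim: r => [|x r IH].
  rewrite big_nil; under eq_fun do rewrite big_nil; exact: Cv_cst.
rewrite big_cons; under eq_fun do rewrite big_cons.
case: (boolP (P x)) => Px; last exact: IH.
exact: Cv_mul (H _ Px) IH.
Qed.

Lemma Cv_epsdelta f l : Cv f l -> forall e : R, 0 < e -> exists2 d : R, 0 < d &
  forall a b, `|a - p0.1| < d -> `|b - p0.2| < d -> `|f (a, b) - l| < e.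
Proof.
move=> /cvgrPdistC_lt H e e0.
have := H e e0.
move=> /nbhs_ballP [d d0 Hd]; exists d => // a b ha hb.
apply: Hd; split; rewrite /ball /= distrC //.
Qed.
End Cont.

Lemma card_ge N k : #|[set j : 'I_N | (k <= j)%N]| = (N - k)%N.
Proof.
rewrite -sum1_card; transitivity (\sum_(k <= i < N) 1)%N.
  by rewrite big_geq_mkord; apply: eq_bigl => i; rewrite inE.
by rewrite sum_nat_const_nat muln1.
Qed.

Lemma mult_le N (lam : 'I_N -> nat) r : (mult lam r <= N)%N.
Proof. by rewrite /mult; have := max_card [set i | lam i == r]; rewrite card_ord. Qed.

Lemma sig_zero N (lam : 'I_N -> nat) : is_signature lam ->
  forall i, (lam i == 0%N) = (ell lam <= i)%N.
Proof.
move=> Hs i; rewrite /ell; have Hm := mult_le lam 0.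
case: (boolP (lam i == 0%N)) => Hi.
  have: (#|[set j : 'I_N | (i <= j)%N]| <= mult lam 0)%N.
    apply: subset_leq_card; apply/fintype.subsetP => j; rewrite !inE => Hij.
    by have := Hs _ _ Hij; rewrite (eqP Hi) leqn0.
  rewrite card_ge => H; apply/esym; rewrite leq_subLR; lia.
have: (mult lam 0 <= #|[set j : 'I_N | (i.+1 <= j)%N]|)%N.
  apply: subset_leq_card; apply/fintype.subsetP => j; rewrite !inE => Hj.
  rewrite ltnNge; apply/negP => Hji; have := Hs _ _ Hji.
  by rewrite (eqP Hj) leqn0 (negbTE Hi).
rewrite card_ge => H; apply/esym/negbTE; rewrite -ltnNge.
have := ltn_ord i; lia.
Qed.

Lemma count_xi (R : ringType) N (lam : 'I_N -> nat) (x : R) :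
  \prod_(i < N) (if lam i == 0%N then 1 else x) = x ^+ ell lam.
Proof.
rewrite (eq_bigr (fun i => if lam i != 0%N then x else 1)); last first.
  by move=> i _; case: (lam i == 0%N).
rewrite -big_mkcond prodr_const; congr (_ ^+ _).
rewrite /ell /mult; have := cardsC [set i : 'I_N | lam i == 0%N].
rewrite card_ord => HN.
have E : #|(fun i : 'I_N => lam i != 0%N)| = #|~: [set i : 'I_N | lam i == 0%N]|.
  by apply: eq_card => i; rewrite !inE.
rewrite E; apply/eqP; rewrite -(eqn_add2l #|[set i : 'I_N | lam i == 0%N]|) HN.
by rewrite subnKC //; exact: (mult_le lam 0).
Qed.

Section Alg.
Variable R : fieldType.

Definition phiAB (t a b : R) (k : nat) (u : R) : R :=
  if k is k'.+1 then (1 - t) * u ^+ k' * (u - b) / (1 - a * u)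
  else (1 - t) / (1 - a * u).

Definition phihatAB (t a b : R) (k : nat) (u : R) : R :=
  if k is k'.+1 then (1 - t) * u ^+ k' * (u - a) / (1 - b * u)
  else (1 - t) / (1 - b * u).

Lemma phi_spec (s0 xi0 t u : R) k : xi0 != 0 ->
  phi (spec_s s0) (spec_xi xi0) t k u =
  (if k == 0%N then 1 else xi0) * phiAB t (s0 * xi0) (s0 / xi0) k u.
Proof.
move=> Hx; case: k => [|k]; rewrite /phi /phiAB /=.
  by rewrite big_ord0 mulr1 mul1r.
rewrite big_ord_recl /=.
rewrite (eq_bigr (fun _ => u)); last first.
  by move=> j _; rewrite /spec_s /spec_xi /= !(mul0r, mul1r, subr0, divr1).
rewrite prodr_const card_ord /spec_s /spec_xi /= !(mul0r, subr0, divr1).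
have -> : xi0 * u - s0 = xi0 * (u - s0 / xi0) by rewrite mulrBr mulrCA divff // mulr1.
ring.
Qed.

Lemma phihat_spec (s0 xi0 t u : R) k : xi0 != 0 ->
  phihat (spec_s s0) (spec_xi xi0) t k u =
  (if k == 0%N then 1 else xi0^-1) * phihatAB t (s0 * xi0) (s0 / xi0) k u.
Proof.
move=> Hx; case: k => [|k]; rewrite /phihat /phi /phihatAB /=.
  by rewrite big_ord0 mulr1 mul1r.
rewrite big_ord_recl /=.
rewrite (eq_bigr (fun _ => u)); last first.
  by move=> j _; rewrite /spec_s /spec_xi /= invr1 !(mul0r, mul1r, subr0, divr1).
rewrite prodr_const card_ord /spec_s /spec_xi /= !(mul0r, subr0, divr1).
have -> : xi0^-1 * u - s0 = xi0^-1 * (u - s0 * xi0).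
  by rewrite mulrBr mulrCA mulVf // mulr1.
ring.
Qed.
End Alg.

Section Norm.
Variable R : fieldType.
Variables (N : nat) (lam : 'I_N -> nat) (t : R).

Definition GF (a b : R) (u : 'I_N -> R) : R :=
  \sum_(sg : 'S_N) (symprod t (fun i => u (sg i)) *
     \prod_(i < N) phiAB t a b (lam i) (u (sg i))).
Definition GFs (a b : R) (v : 'I_N -> R) : R :=
  \sum_(sg : 'S_N) (symprod t (fun i => v (sg i)) *
     \prod_(i < N) phihatAB t a b (lam i) (v (sg i))).
Definition pref (a b : R) : R :=
  \prod_(r < sigbound lam)
     (qpoch (if (r : nat) == 0%N then a * b else 0) t (mult lam r) /
      qpoch t t (mult lam r)).

Lemma F_eq s0 xi0 u : xi0 != 0 ->
  xi0 ^- ell lam * spinF (spec_s s0) (spec_xi xi0) t lam u =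
  GF (s0 * xi0) (s0 / xi0) u.
Proof.
move=> Hx; rewrite /spinF /GF mulr_sumr; apply: eq_bigr => sg _.
rewrite (eq_bigr (fun i => (if lam i == 0%N then 1 else xi0) *
   phiAB t (s0 * xi0) (s0 / xi0) (lam i) (u (sg i)))); last first.
  by move=> i _; exact: phi_spec.
rewrite big_split /= count_xi mulrCA; congr (_ * _).
by rewrite mulrA mulVf ?mul1r // expf_neq0.
Qed.

Lemma Fstar_eq s0 xi0 v : xi0 != 0 ->
  xi0 ^+ ell lam * spinFstar (spec_s s0) (spec_xi xi0) t lam v =
  pref (s0 * xi0) (s0 / xi0) * GFs (s0 * xi0) (s0 / xi0) v.
Proof.
move=> Hx; rewrite /spinFstar /GFs /pref mulrCA; congr (_ * _).
  apply: eq_bigr => r _; congr (qpoch _ _ _ / _).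
  rewrite /spec_s; case: (nat_of_ord r) => [|r'] /=; last by rewrite expr0n.
  by rewrite expr2 -mulrA (mulrCA xi0) mulfV // mulr1.
rewrite mulr_sumr; apply: eq_bigr => sg _.
rewrite (eq_bigr (fun i => (if lam i == 0%N then 1 else xi0^-1) *
   phihatAB t (s0 * xi0) (s0 / xi0) (lam i) (v (sg i)))); last first.
  by move=> i _; exact: phihat_spec.
rewrite big_split /= count_xi mulrCA; congr (_ * _).
by rewrite mulrA exprVn mulfV ?mul1r // expf_neq0.
Qed.
End Norm.

Section Vals.
Variable R : numFieldType.
Variables (N : nat) (lam : 'I_N -> nat) (t : R).
Hypotheses (t0 : 0 < t) (t1 : t < 1).

Lemma qpoch_ne0 m : qpoch t t m != 0.
Proof.
rewrite /qpoch; apply/prodf_neq0 => i _.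
rewrite -exprS subr_eq0 eq_sym lt_eqF // exprn_ilt1 ?ltW //.
Qed.

Lemma qpoch0 m : qpoch (0 : R) t m = 1.
Proof. by rewrite /qpoch big1 // => i _; rewrite mul0r subr0. Qed.

Lemma GF_val (u : 'I_N -> R) : is_signature lam -> (forall i, u i != 0) ->
  GF lam t 0 (t ^- N.-1) u =
  (\prod_(r < sigbound lam) qpoch t t (mult lam r)) * FHL lam t u.
Proof.
move=> Hs Hu; rewrite /FHL.
set X := \prod_(r < sigbound lam) qpoch t t (mult lam r).
have HX : X != 0 by apply/prodf_neq0 => r _; exact: qpoch_ne0.
rewrite prodfV -/X (mulrC ((1 - t) ^+ N)) !mulrA mulfV // mul1r.
rewrite /GF mulr_sumr; apply: eq_bigr => sg _; rewrite mulrCA; congr (_ * _).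
have -> : (1 - t) ^+ N = \prod_(i < N) (1 - t) by rewrite prodr_const card_ord.
rewrite (big_mkcond (fun i : 'I_N => (i < ell lam)%N)) -big_split /=.
apply: eq_bigr => i _; rewrite ltnNge -sig_zero //.
have := Hu (sg i); move: (u (sg i)) => w Hw.
rewrite /phiAB; case: (lam i) => [|k] /=.
  by rewrite mul0r subr0 divr1 mulr1.
rewrite mul0r subr0 divr1.
have H : w * (1 - t ^- N.-1 * w^-1) = w - t ^- N.-1.
  by rewrite mulrBr mulr1 mulrCA mulfV ?mulr1.
rewrite -H exprS; ring.
Qed.

Lemma GFs_val (v : 'I_N -> R) : (forall j, 1 - v j * t ^- N.-1 != 0) ->
  pref lam t 0 (t ^- N.-1) * GFs lam t 0 (t ^- N.-1) v =
  (\prod_(j < N) (1 - v j * t ^- N.-1)^-1) *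
  (\prod_(1 <= r < sigbound lam) (qpoch t t (mult lam r))^-1) *
  QHL lam t v.
Proof.
move=> Hv; set c := t ^- N.-1.
have Hp : pref lam t 0 c = \prod_(r < sigbound lam) (qpoch t t (mult lam r))^-1.
  apply: eq_bigr => r _; rewrite mul0r.
  by case: (nat_of_ord r == 0%N); rewrite qpoch0 div1r.
rewrite Hp /sigbound big_ord_recl big_add1 big_mkord /=.
have -> : \prod_(i < \max_(i < N) lam i)
            (qpoch t t (mult lam (lift ord0 i)))^-1 =
          \prod_(i < \max_(i < N) lam i) (qpoch t t (mult lam i.+1))^-1.
  by apply: eq_bigr => i _; rewrite lift0.
set Q1 := \prod_(i < _) _.
set I := \prod_(j < N) (1 - v j * c)^-1.
have HG : GFs lam t 0 c v = (1 - t) ^+ N * I *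
    \sum_(sg : 'S_N) (symprod t (fun i => v (sg i)) * \prod_(i < N) v (sg i) ^+ lam i).
  rewrite /GFs mulr_sumr; apply: eq_bigr => sg _.
  have -> : \prod_(i < N) phihatAB t 0 c (lam i) (v (sg i)) =
     \prod_(i < N) ((1 - t) * v (sg i) ^+ lam i * (1 - c * v (sg i))^-1).
    apply: eq_bigr => i _; rewrite /phihatAB; case: (lam i) => [|k] /=.
      by rewrite expr0 mulr1.
    by rewrite subr0 exprSr mulrA.
  rewrite !big_split /= prodr_const card_ord.
  have -> : \prod_(i < N) (1 - c * v (sg i))^-1 = I.
    rewrite /I [RHS](reindex_inj (@perm_inj _ sg)) /=.
    by apply: eq_bigr => j _; rewrite mulrC.
  ring.
rewrite HG /QHL.
have -> : (N - ell lam)%N = mult lam 0.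
  by rewrite /ell subKn // mult_le.
ring.
Qed.
End Vals.

Section Conts.
Variable R : numFieldType.

Lemma Cv_phiAB (t c v : R) k :
  Cv (0, c) (fun p => phiAB t p.1 p.2 k v) (phiAB t 0 c k v).
Proof.
case: k => [|k]; rewrite /phiAB /=.
  apply: Cv_mul; first exact: Cv_cst.
  apply: Cv_inv; first by rewrite mul0r subr0 oner_neq0.
  apply: Cv_add; first exact: Cv_cst.
  by apply: Cv_opp; apply: Cv_mul; [exact: Cv_fst | exact: Cv_cst].
apply: Cv_mul.
  apply: Cv_mul; first exact: Cv_cst.
  by apply: Cv_add; [exact: Cv_cst | apply: Cv_opp; exact: Cv_snd].
apply: Cv_inv; first by rewrite mul0r subr0 oner_neq0.
apply: Cv_add; first exact: Cv_cst.
by apply: Cv_opp; apply: Cv_mul; [exact: Cv_fst | exact: Cv_cst].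
Qed.

Lemma Cv_phihatAB (t c v : R) k : 1 - c * v != 0 ->
  Cv (0, c) (fun p => phihatAB t p.1 p.2 k v) (phihatAB t 0 c k v).
Proof.
move=> Hc; case: k => [|k]; rewrite /phihatAB /=.
  apply: Cv_mul; first exact: Cv_cst.
  apply: Cv_inv => //.
  apply: Cv_add; first exact: Cv_cst.
  by apply: Cv_opp; apply: Cv_mul; [exact: Cv_snd | exact: Cv_cst].
apply: Cv_mul.
  apply: Cv_mul; first exact: Cv_cst.
  by apply: Cv_add; [exact: Cv_cst | apply: Cv_opp; exact: Cv_fst].
apply: Cv_inv => //.
apply: Cv_add; first exact: Cv_cst.
by apply: Cv_opp; apply: Cv_mul; [exact: Cv_snd | exact: Cv_cst].
Qed.

Variables (N : nat) (lam : 'I_N -> nat) (t : R).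

Lemma Cv_GF c u : Cv (0, c) (fun p => GF lam t p.1 p.2 u) (GF lam t 0 c u).
Proof.
rewrite /GF; apply: Cv_sum => sg _; apply: Cv_mul; first exact: Cv_cst.
by apply: Cv_prod => i _; exact: Cv_phiAB.
Qed.

Lemma Cv_GFs c v : (forall j, 1 - v j * c != 0) ->
  Cv (0, c) (fun p => GFs lam t p.1 p.2 v) (GFs lam t 0 c v).
Proof.
move=> Hv; rewrite /GFs; apply: Cv_sum => sg _; apply: Cv_mul; first exact: Cv_cst.
by apply: Cv_prod => i _; apply: Cv_phihatAB; rewrite mulrC.
Qed.

Lemma Cv_pref c : Cv (0, c) (fun p => pref lam t p.1 p.2) (pref lam t 0 c).
Proof.
rewrite /pref; apply: Cv_prod => r _; apply: Cv_mul; last exact: Cv_cst.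
case: (nat_of_ord r == 0%N) => /=; last exact: Cv_cst.
rewrite /qpoch; apply: Cv_prod => i _.
apply: Cv_add; first exact: Cv_cst.
apply: Cv_opp; apply: Cv_mul; last exact: Cv_cst.
by apply: Cv_mul; [exact: Cv_fst | exact: Cv_snd].
Qed.
End Conts.

Theorem mainTheorem7 (R : numFieldType) (N : nat) (lam : 'I_N -> nat) (t : R) :
  (0 < N)%N -> is_signature lam -> 0 < t -> t < 1 ->
  (* both normalized functions depend on (s_0, xi_0) only through
     a = s_0 xi_0 and b = s_0 / xi_0 *)
  (forall s0 xi0 s0' xi0' : R, xi0 != 0 -> xi0' != 0 ->
     s0 * xi0 = s0' * xi0' -> s0 / xi0 = s0' / xi0' ->
     (forall u : 'I_N -> R,
        xi0 ^- ell lam * spinF (spec_s s0) (spec_xi xi0) t lam u =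
        xi0' ^- ell lam * spinF (spec_s s0') (spec_xi xi0') t lam u) /\
     (forall v : 'I_N -> R,
        xi0 ^+ ell lam * spinFstar (spec_s s0) (spec_xi xi0) t lam v =
        xi0' ^+ ell lam * spinFstar (spec_s s0') (spec_xi xi0') t lam v)) /\
  (* limit a -> 0, b -> t^(1-N) for F *)
  (forall u : 'I_N -> R, injective u -> (forall i, u i != 0) ->
     forall eps : R, 0 < eps -> exists2 delta : R, 0 < delta &
       forall s0 xi0 : R, xi0 != 0 ->
         `|s0 * xi0| < delta -> `|s0 / xi0 - t ^- N.-1| < delta ->
         `|xi0 ^- ell lam * spinF (spec_s s0) (spec_xi xi0) t lam u
           - (\prod_(r < sigbound lam) qpoch t t (mult lam r)) * FHL lam t u|
         < eps) /\
  (* limit a -> 0, b -> t^(1-N) for F^* *)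
  (forall v : 'I_N -> R, injective v -> (forall j, 1 - v j * t ^- N.-1 != 0) ->
     forall eps : R, 0 < eps -> exists2 delta : R, 0 < delta &
       forall s0 xi0 : R, xi0 != 0 ->
         `|s0 * xi0| < delta -> `|s0 / xi0 - t ^- N.-1| < delta ->
         `|xi0 ^+ ell lam * spinFstar (spec_s s0) (spec_xi xi0) t lam v
           - (\prod_(j < N) (1 - v j * t ^- N.-1)^-1) *
             (\prod_(1 <= r < sigbound lam) (qpoch t t (mult lam r))^-1) *
             QHL lam t v|
         < eps).

Proof.
move=> HN Hs t0 t1; split.
  move=> s0 xi0 s0' xi0' Hx Hx' Ha Hb; split.
    by move=> u; rewrite !F_eq // Ha Hb.
  by move=> v; rewrite !Fstar_eq // Ha Hb.
split.
  move=> u _ Hu e e0.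
  have [d d0 Hd] := Cv_epsdelta (@Cv_GF R N lam t (t ^- N.-1) u) e0.
  exists d => // s0 xi0 Hx Ha Hb.
  rewrite F_eq // -GF_val //.
  by apply: Hd => /=; rewrite ?subr0.
move=> v _ Hv e e0.
have Hv' : forall j, 1 - v j * t ^- N.-1 != 0 by [].
have [d d0 Hd] := Cv_epsdelta
  (Cv_mul (@Cv_pref R N lam t (t ^- N.-1)) (@Cv_GFs R N lam t _ v Hv')) e0.
exists d => // s0 xi0 Hx Ha Hb.
rewrite Fstar_eq // -GFs_val //.
by apply: Hd => /=; rewrite ?subr0.
Qed.
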